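(* Assume the standing assumptions, suppose $(D)$ has an optimal solution $p^*$ (a minimizer of $\theta$) with $\|p^*\|\le R$ for some $R>0$, assume $D_f>0$, let $\epsilon>0$, $\rho=\frac{\epsilon}{3D_f}$, $\kappa=\frac{2\epsilon}{3R^2}$, and let $(p_k)_{k\ge0}$ be generated by the fast gradient method applied to $\theta_{\rho,\kappa}$. Then for all $k\ge0$, $$\|\nabla\theta_\rho(p_k)\|=\|Ax_{f,p_k}-x_{g,p_k}\|\le 2\sqrt{L(\rho,\kappa)\Bigl(\theta(0)-\theta(p^* )+\frac\epsilon3\Bigr)}\,e^{-\frac k2\sqrt{\kappa/L(\rho,\kappa)}}+\frac{4\sqrt2\,\epsilon}{3R}.$$
   Context: Standing assumptions: $\mathcal{H}$ is a real Hilbert space; $f:\mathcal{H}\to\mathbb{R}\cup\{+\infty\}$ is proper, convex, lower semicontinuous with bounded effective domain; $g:\mathbb{R}^m\to\mathbb{R}\cup\{+\infty\}$ is proper, lower semicontinuous and $\mu$-strongly convex for some $\mu>0$; $A:\mathcal{H}\to\mathbb{R}^m$ is linear and continuous with $A(\operatorname{dom} f)\cap\operatorname{dom} g\neq\emptyset$. $(D)$ is $\sup_{p}\{-f^*(A^*p)-g^*(-p)\}$. $D_f:=\sup\{\tfrac12\|x\|^2:x\in\operatorname{dom} f\}$. $\theta(p):=f^*(A^*p)+g^*(-p)$. For $\rho>0$, $f_\rho^*(q):=\sup_{x\in\mathcal{H}}\{\langle q,x\rangle-f(x)-\frac\rho2\|x\|^2\}$; $x_{f,p}$ is the unique maximizer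 in the definition of $f_\rho^*(A^*p)$; $x_{g,p}:=\nabla g^*(-p)$, the unique minimizer of $x\mapsto\langle p,x\rangle+g(x)$ on $\mathbb{R}^m$. $\theta_\rho(p):=f_\rho^*(A^*p)+g^*(-p)$, whose gradient is $Ax_{f,p}-x_{g,p}$; $\theta_{\rho,\kappa}(p):=\theta_\rho(p)+\frac\kappa2\|p\|^2$; $L(\rho,\kappa):=\frac{\|A\|^2}{\rho}+\frac1\mu+\kappa$. The fast gradient method applied to $\theta_{\rho,\kappa}$ is: $w_0=p_0=0$ and for $k\ge0$, $p_{k+1}=w_k-\frac{1}{L(\rho,\kappa)}\nabla\theta_{\rho,\kappa}(w_k)$, $w_{k+1}=p_{k+1}+\frac{\sqrt{L(\rho,\kappa)}-\sqrt\kappa}{\sqrt{L(\rho,\kappa)}+\sqrt\kappa}(p_{k+1}-p_k)$. *)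

(* Defs.v *)
From Stdlib Require Import Reals Lra ClassicalEpsilon FunctionalExtensionality.
From Stdlib Require Fin.
Open Scope R_scope.

(* ---------- Extended reals (-oo excluded): None = +oo ---------- *)
Definition ext := option R.

Definition ext_le (a b : ext) : Prop :=
  match a, b with
  | _, None => True
  | None, Some _ => False
  | Some x, Some y => x <= y
  end.

Definition ext_lt_real (r : R) (b : ext) : Prop :=
  match b with None => True | Some y => r < y end.

Definition ext_add (a b : ext) : ext :=
  match a, b with Some x, Some y => Some (x + y) | _, _ => None end.

(* supremum of a set of reals in (-oo,+oo]; +oo when no least upper bound
   exists (the sets used below are always nonempty) *)
Definition esup (E : R -> Prop) : ext :=
  match excluded_middle_informative (exists l, is_lub E l) with
  | left h => Some (proj1_sig (constructive_indefinite_description _ h))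
  | right _ => None
  end.

Record InnerSpace := {
  carrier :> Type;
  hzero : carrier;
  hadd : carrier -> carrier -> carrier;
  hopp : carrier -> carrier;
  hscal : R -> carrier -> carrier;
  hinner : carrier -> carrier -> R;
  hadd_assoc : forall x y z, hadd x (hadd y z) = hadd (hadd x y) z;
  hadd_comm : forall x y, hadd x y = hadd y x;
  hadd_0 : forall x, hadd hzero x = x;
  hadd_opp : forall x, hadd x (hopp x) = hzero;
  hscal_1 : forall x, hscal 1 x = x;
  hscal_assoc : forall a b x, hscal a (hscal b x) = hscal (a * b) x;
  hscal_distr_r : forall a b x, hscal (a + b) x = hadd (hscal a x) (hscal b x);
  hscal_distr_l : forall a x y, hscal a (hadd x y) = hadd (hscal a x) (hscal a y);
  hinner_sym : forall x y, hinner x y = hinner y x;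
  hinner_add : forall x y z, hinner (hadd x y) z = hinner x z + hinner y z;
  hinner_scal : forall a x y, hinner (hscal a x) y = a * hinner x y;
  hinner_pos : forall x, 0 <= hinner x x;
  hinner_def : forall x, hinner x x = 0 -> x = hzero
}.

Arguments hzero {_}.
Arguments hadd {_} _ _.
Arguments hopp {_} _.
Arguments hscal {_} _ _.
Arguments hinner {_} _ _.

Definition hnorm {H : InnerSpace} (x : H) : R := sqrt (hinner x x).
Definition hsub {H : InnerSpace} (x y : H) : H := hadd x (hopp y).
Definition hdist {H : InnerSpace} (x y : H) : R := hnorm (hsub x y).
Definition hcomb {H : InnerSpace} (t : R) (x y : H) : H :=
  hadd (hscal t x) (hscal (1 - t) y).

Definition complete (H : InnerSpace) : Prop :=
  forall u : nat -> H,
    (forall e, 0 < e -> exists N, forall n k, (n >= N)%nat -> (k >= N)%nat ->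
        hdist (u n) (u k) < e) ->
    exists l : H, forall e, 0 < e -> exists N, forall n, (n >= N)%nat ->
        hdist (u n) l < e.

Definition vec (m : nat) := Fin.t m -> R.

Fixpoint vdot (m : nat) : vec m -> vec m -> R :=
  match m return vec m -> vec m -> R with
  | O => fun _ _ => 0
  | S n => fun x y => x Fin.F1 * y Fin.F1 +
                      vdot n (fun i => x (Fin.FS i)) (fun i => y (Fin.FS i))
  end.

Definition vnorm {m} (x : vec m) : R := sqrt (vdot m x x).
Definition vzero {m} : vec m := fun _ => 0.
Definition vadd {m} (x y : vec m) : vec m := fun i => x i + y i.
Definition vopp {m} (x : vec m) : vec m := fun i => - x i.
Definition vsub {m} (x y : vec m) : vec m := fun i => x i - y i.
Definition vscal {m} (a : R) (x : vec m) : vec m := fun i => a * x i.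
Definition vdist {m} (x y : vec m) : R := vnorm (vsub x y).
Definition vcomb {m} (t : R) (x y : vec m) : vec m :=
  vadd (vscal t x) (vscal (1 - t) y).

Definition dom {X} (f : X -> ext) (x : X) : Prop := f x <> None.

Definition proper {X} (f : X -> ext) : Prop := exists x, dom f x.

Definition convex {X} (comb : R -> X -> X -> X) (f : X -> ext) : Prop :=
  forall x y a b t, f x = Some a -> f y = Some b -> 0 <= t <= 1 ->
    exists c, f (comb t x y) = Some c /\ c <= t * a + (1 - t) * b.

Definition lsc {X} (dist : X -> X -> R) (f : X -> ext) : Prop :=
  forall x r, ext_lt_real r (f x) ->
    exists d, 0 < d /\ forall y, dist x y < d -> ext_lt_real r (f y).

Definition strongly_convex {m} (mu : R) (g : vec m -> ext) : Prop :=
  convex (@vcomb m) (fun x => option_map (fun v => v - mu / 2 * (vnorm x) ^ 2) (g x)).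

Definition bounded_dom {H : InnerSpace} (f : H -> ext) : Prop :=
  exists M, forall x, dom f x -> hnorm x <= M.

Definition linear_map {H : InnerSpace} {m} (A : H -> vec m) : Prop :=
  (forall x y, A (hadd x y) = vadd (A x) (A y)) /\
  (forall a x, A (hscal a x) = vscal a (A x)).

Definition bounded_map {H : InnerSpace} {m} (A : H -> vec m) : Prop :=
  exists C, forall x, vnorm (A x) <= C * hnorm x.

Definition is_opnorm {H : InnerSpace} {m} (A : H -> vec m) (nA : R) : Prop :=
  is_lub (fun r => exists x, hnorm x <= 1 /\ r = vnorm (A x)) nA.

Definition is_Df {H : InnerSpace} (f : H -> ext) (Df : R) : Prop :=
  is_lub (fun r => exists x, dom f x /\ r = / 2 * (hnorm x) ^ 2) Df.

Definition conjH {H : InnerSpace} (f : H -> ext) (q : H) : ext :=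
  esup (fun r => exists x v, f x = Some v /\ r = hinner q x - v).

Definition conjV {m} (g : vec m -> ext) (q : vec m) : ext :=
  esup (fun r => exists x v, g x = Some v /\ r = vdot m q x - v).

Definition theta {H : InnerSpace} {m} (f : H -> ext) (g : vec m -> ext)
  (Astar : vec m -> H) (p : vec m) : ext :=
  ext_add (conjH f (Astar p)) (conjV g (vopp p)).

Definition is_xf {H : InnerSpace} {m} (f : H -> ext) (Astar : vec m -> H)
  (rho : R) (p : vec m) (x0 : H) : Prop :=
  exists v0, f x0 = Some v0 /\
    forall x v, f x = Some v ->
      hinner (Astar p) x - v - rho / 2 * (hnorm x) ^ 2
      <= hinner (Astar p) x0 - v0 - rho / 2 * (hnorm x0) ^ 2.

Definition is_xg {m} (g : vec m -> ext) (p : vec m) (x0 : vec m) : Prop :=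
  exists v0, g x0 = Some v0 /\
    forall x v, g x = Some v -> vdot m p x0 + v0 <= vdot m p x + v.

Definition rho_of (eps Df : R) : R := eps / (3 * Df).
Definition kappa_of (eps Rb : R) : R := 2 * eps / (3 * Rb ^ 2).
Definition Lconst (nA rho mu kappa : R) : R := nA ^ 2 / rho + 1 / mu + kappa.

Fixpoint fgm {m} (grad : vec m -> vec m) (L kappa : R) (k : nat) : vec m * vec m :=
  match k with
  | O => (vzero, vzero)
  | S k' =>
      let (p, w) := fgm grad L kappa k' in
      let p' := vsub w (vscal (1 / L) (grad w)) in
      let beta := (sqrt L - sqrt kappa) / (sqrt L + sqrt kappa) in
      (p', vadd p' (vscal beta (vsub p' p)))
  end.

(* Main.v *)
Require Import Defs.
From Stdlib Require Import Reals Lra Psatz FunctionalExtensionality ClassicalEpsilon.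
Open Scope R_scope.

Lemma vdot_sym m : forall x y : vec m, vdot m x y = vdot m y x.
Proof. induction m; intros x y; simpl; [reflexivity|]. rewrite IHm; ring. Qed.

Lemma vdot_addl m : forall x y z : vec m, vdot m (vadd x y) z = vdot m x z + vdot m y z.
Proof. induction m; intros x y z; simpl; [ring|].
  specialize (IHm (fun i => x (Fin.FS i)) (fun i => y (Fin.FS i)) (fun i => z (Fin.FS i))).
  unfold vadd in *. simpl in *. rewrite IHm. ring. Qed.

Lemma vdot_scall m : forall a (x z : vec m), vdot m (vscal a x) z = a * vdot m x z.
Proof. induction m; intros a x z; simpl; [ring|].
  specialize (IHm a (fun i => x (Fin.FS i)) (fun i => z (Fin.FS i))).
  unfold vscal in *. simpl in *. rewrite IHm. ring. Qed.

Lemma vdot_subl m : forall x y z : vec m, vdot m (vsub x y) z = vdot m x z - vdot m y z.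
Proof. induction m; intros x y z; simpl; [ring|].
  specialize (IHm (fun i => x (Fin.FS i)) (fun i => y (Fin.FS i)) (fun i => z (Fin.FS i))).
  unfold vsub in *. simpl in *. rewrite IHm. ring. Qed.

Lemma vdot_oppl m : forall x z : vec m, vdot m (vopp x) z = - vdot m x z.
Proof. induction m; intros x z; simpl; [ring|].
  specialize (IHm (fun i => x (Fin.FS i)) (fun i => z (Fin.FS i))).
  unfold vopp in *. simpl in *. rewrite IHm. ring. Qed.

Lemma vdot_zerol m : forall z : vec m, vdot m vzero z = 0.
Proof. induction m; intros z; simpl; [ring|].
  specialize (IHm (fun i => z (Fin.FS i))).
  unfold vzero in *. simpl in *. rewrite IHm. ring. Qed.

Lemma vdot_pos m : forall x : vec m, 0 <= vdot m x x.
Proof. induction m; intros x; simpl; [lra|].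
  specialize (IHm (fun i => x (Fin.FS i))). nra. Qed.

Lemma vdot_eq0 m : forall x : vec m, vdot m x x = 0 -> x = vzero.
Proof. induction m; intros x H.
  - apply functional_extensionality; intro i. inversion i.
  - simpl in H. pose proof (vdot_pos m (fun i => x (Fin.FS i))).
    assert (h1 : x Fin.F1 = 0) by nra.
    assert (h2 : vdot m (fun i => x (Fin.FS i)) (fun i => x (Fin.FS i)) = 0) by nra.
    apply IHm in h2.
    apply functional_extensionality; intro i.
    pattern i; apply Fin.caseS'; [exact h1|].
    intro j. exact (f_equal (fun v => v j) h2).
Qed.

Lemma vdot_addr m (x y z : vec m) : vdot m z (vadd x y) = vdot m z x + vdot m z y.
Proof. rewrite vdot_sym, vdot_addl, (vdot_sym m x), (vdot_sym m y); ring. Qed.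
Lemma vdot_scalr m a (x z : vec m) : vdot m z (vscal a x) = a * vdot m z x.
Proof. rewrite vdot_sym, vdot_scall, vdot_sym; ring. Qed.
Lemma vdot_subr m (x y z : vec m) : vdot m z (vsub x y) = vdot m z x - vdot m z y.
Proof. rewrite vdot_sym, vdot_subl, (vdot_sym m x), (vdot_sym m y); ring. Qed.
Lemma vdot_oppr m (x z : vec m) : vdot m z (vopp x) = - vdot m z x.
Proof. rewrite vdot_sym, vdot_oppl, vdot_sym; ring. Qed.
Lemma vdot_zeror m (z : vec m) : vdot m z vzero = 0.
Proof. rewrite vdot_sym; apply vdot_zerol. Qed.

Ltac vexp := repeat (rewrite ?vdot_addl, ?vdot_addr, ?vdot_scall, ?vdot_scalr,
   ?vdot_subl, ?vdot_subr, ?vdot_oppl, ?vdot_oppr, ?vdot_zerol, ?vdot_zeror).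

Ltac vexp_in h := repeat (rewrite ?vdot_addl, ?vdot_addr, ?vdot_scall, ?vdot_scalr,
   ?vdot_subl, ?vdot_subr, ?vdot_oppl, ?vdot_oppr, ?vdot_zerol, ?vdot_zeror in h).

Lemma vnorm2 m (x : vec m) : vnorm x ^ 2 = vdot m x x.
Proof. unfold vnorm. rewrite pow2_sqrt; [reflexivity| apply vdot_pos]. Qed.
Lemma vnorm_pos m (x : vec m) : 0 <= vnorm x.
Proof. apply sqrt_pos. Qed.

Lemma young m (d a : vec m) al : 0 < al -> 2 * vdot m d a <= al * vdot m d d + vdot m a a / al.
Proof. intros hal. pose proof (vdot_pos m (vsub (vscal al d) a)) as h. vexp_in h.
  rewrite (vdot_sym m a d) in h.
  apply (Rmult_le_reg_l al); [lra|]. field_simplify; [|lra]. nra. Qed.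

Lemma cauchy m (x y : vec m) : vdot m x y <= vnorm x * vnorm y.
Proof.
  destruct (Req_dec (vdot m x x) 0) as [h0|h0].
  { apply vdot_eq0 in h0; subst. rewrite vdot_zerol. pose proof (vnorm_pos m vzero); pose proof (vnorm_pos m y); nra. }
  destruct (Req_dec (vdot m y y) 0) as [h1|h1].
  { apply vdot_eq0 in h1; subst. rewrite vdot_zeror. pose proof (vnorm_pos m vzero); pose proof (vnorm_pos m x); nra. }
  pose proof (vdot_pos m x); pose proof (vdot_pos m y).
  assert (nx : 0 < vnorm x) by (apply sqrt_lt_R0; lra).
  assert (ny : 0 < vnorm y) by (apply sqrt_lt_R0; lra).
  pose proof (young m x y (vnorm y / vnorm x) ltac:(apply Rdiv_lt_0_compat; lra)) as h.
  rewrite <- (vnorm2 m x), <- (vnorm2 m y) in h.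
  replace (vnorm y / vnorm x * vnorm x ^ 2 + vnorm y ^ 2 / (vnorm y / vnorm x)) with (2 * (vnorm x * vnorm y)) in h by (field; lra).
  lra. Qed.

Lemma vtriangle m (x y : vec m) : vnorm (vadd x y) <= vnorm x + vnorm y.
Proof. pose proof (vnorm_pos m x); pose proof (vnorm_pos m y).
  apply Rsqr_incr_0_var; [|lra]. unfold Rsqr.
  replace (vnorm (vadd x y) * vnorm (vadd x y)) with (vnorm (vadd x y) ^ 2) by ring.
  rewrite vnorm2. vexp. rewrite (vdot_sym m y x). pose proof (cauchy m x y).
  rewrite <- (vnorm2 m x), <- (vnorm2 m y). nra. Qed.

Lemma hinner_addr (H : InnerSpace) (x y z : H) : hinner x (hadd y z) = hinner x y + hinner x z.
Proof. rewrite hinner_sym, hinner_add, (hinner_sym _ y), (hinner_sym _ z); ring. Qed.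
Lemma hinner_scalr (H : InnerSpace) a (x y : H) : hinner x (hscal a y) = a * hinner x y.
Proof. rewrite hinner_sym, hinner_scal, hinner_sym; ring. Qed.
Lemma hinner_zerol (H : InnerSpace) (y : H) : hinner hzero y = 0.
Proof. pose proof (hinner_add H hzero hzero y) as e. rewrite hadd_0 in e. lra. Qed.
Lemma hinner_oppl (H : InnerSpace) (x y : H) : hinner (hopp x) y = - hinner x y.
Proof. pose proof (hinner_add H x (hopp x) y) as e. rewrite hadd_opp, hinner_zerol in e. lra. Qed.
Lemma hinner_oppr (H : InnerSpace) (x y : H) : hinner y (hopp x) = - hinner y x.
Proof. rewrite hinner_sym, hinner_oppl, hinner_sym; ring. Qed.
Lemma hinner_subl (H : InnerSpace) (x y z : H) : hinner (hsub x y) z = hinner x z - hinner y z.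
Proof. unfold hsub. rewrite hinner_add, hinner_oppl; ring. Qed.
Lemma hinner_subr (H : InnerSpace) (x y z : H) : hinner z (hsub x y) = hinner z x - hinner z y.
Proof. unfold hsub. rewrite hinner_addr, hinner_oppr; ring. Qed.
Lemma hnorm2 (H : InnerSpace) (x : H) : hnorm x ^ 2 = hinner x x.
Proof. unfold hnorm. rewrite pow2_sqrt; [reflexivity| apply hinner_pos]. Qed.
Lemma hcomb_inner (H : InnerSpace) t (q x y : H) :
  hinner q (hcomb t x y) = t * hinner q x + (1 - t) * hinner q y.
Proof. unfold hcomb. rewrite hinner_addr, !hinner_scalr. ring. Qed.
Lemma hcomb_norm (H : InnerSpace) t (x y : H) :
  hinner (hcomb t x y) (hcomb t x y) = t * hinner x x + (1 - t) * hinner y y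
     - t * (1 - t) * hinner (hsub x y) (hsub x y).
Proof. unfold hcomb. rewrite !hinner_add, !hinner_addr, !hinner_scal, !hinner_scalr.
  rewrite !hinner_subl, !hinner_subr. rewrite (hinner_sym _ y x). ring. Qed.

Lemma A_zero (H : InnerSpace) m (A : H -> vec m) : linear_map A -> A hzero = vzero.
Proof. intros [Ha Hs]. pose proof (Hs 0 hzero) as e.
  assert (hscal 0 (@hzero H) = hzero).
  { pose proof (hscal_distr_r H 0 0 hzero) as e2. rewrite Rplus_0_r in e2.
    pose proof (f_equal (fun v => hadd v (hopp (hscal 0 (@hzero H)))) e2) as e3. simpl in e3.
    rewrite hadd_opp, <- hadd_assoc, hadd_opp, hadd_comm, hadd_0 in e3. auto. }
  rewrite H0 in e. rewrite e. apply functional_extensionality; intro i. unfold vscal, vzero; ring. Qed.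
Lemma A_sub (H : InnerSpace) m (A : H -> vec m) : linear_map A -> forall x y, A (hsub x y) = vsub (A x) (A y).
Proof. intros HA x y. pose proof HA as [Ha Hs].
  assert (e : A (hopp y) = vopp (A y)).
  { pose proof (Ha y (hopp y)) as e. rewrite hadd_opp, (A_zero H m A HA) in e.
    apply functional_extensionality; intro i. pose proof (f_equal (fun v => v i) e) as e'.
    simpl in e'. unfold vzero, vadd, vopp in *. lra. }
  unfold hsub. rewrite Ha, e. apply functional_extensionality; intro i. unfold vadd, vopp, vsub; ring. Qed.
Lemma A_scal (H : InnerSpace) m (A : H -> vec m) : linear_map A -> forall a x, A (hscal a x) = vscal a (A x).
Proof. intros [_ Hs]; auto. Qed.

Lemma opnorm_nonneg (H : InnerSpace) m (A : H -> vec m) nA : linear_map A -> is_opnorm A nA -> 0 <= nA.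
Proof. intros HA [ub _]. apply ub. exists hzero. split.
  - unfold hnorm. rewrite hinner_zerol, sqrt_0; lra.
  - rewrite (A_zero H m A HA). unfold vnorm. rewrite vdot_zerol, sqrt_0; lra. Qed.

Lemma opnorm_bound (H : InnerSpace) m (A : H -> vec m) nA : linear_map A -> is_opnorm A nA ->
  forall z, vdot m (A z) (A z) <= nA ^ 2 * hinner z z.
Proof. intros HA Hn z. pose proof (opnorm_nonneg H m A nA HA Hn) as hn0. destruct Hn as [ub _].
  destruct (Req_dec (hinner z z) 0) as [h0|h0].
  { apply hinner_def in h0. subst. rewrite (A_zero H m A HA), vdot_zerol, hinner_zerol. lra. }
  pose proof (hinner_pos H z).
  set (n := hnorm z). assert (npos : 0 < n) by (apply sqrt_lt_R0; lra).
  assert (nn : n ^ 2 = hinner z z) by apply hnorm2.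
  assert (e := ub (vnorm (A (hscal (/ n) z)))).
  assert (hb : vnorm (A (hscal (/ n) z)) <= nA).
  { apply e. exists (hscal (/ n) z). split; [|reflexivity].
    unfold hnorm. rewrite hinner_scal, hinner_scalr.
    replace (/ n * (/ n * hinner z z)) with 1 by (rewrite <- nn; field; lra). rewrite sqrt_1; lra. }
  rewrite (A_scal H m A HA) in hb. unfold vnorm in hb. rewrite vdot_scall, vdot_scalr in hb.
  replace (/ n * (/ n * vdot m (A z) (A z))) with ((/ n) ^ 2 * vdot m (A z) (A z)) in hb by ring.
  rewrite sqrt_mult_alt in hb by (apply pow2_ge_0).
  rewrite sqrt_pow2 in hb by (left; apply Rinv_0_lt_compat; lra).
  pose proof (sqrt_pos (vdot m (A z) (A z))).
  assert (hs : sqrt (vdot m (A z) (A z)) <= nA * n).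
  { apply (Rmult_le_reg_l (/ n)); [apply Rinv_0_lt_compat; lra|].
    replace (/ n * (nA * n)) with nA by (field; lra). lra. }
  rewrite <- nn. rewrite <- (pow2_sqrt (vdot m (A z) (A z))) by apply vdot_pos.
  replace (nA ^ 2 * n ^ 2) with ((nA * n) ^ 2) by ring.
  apply pow_incr. lra. Qed.

Lemma lim_lemma a b : 0 <= b -> (forall t, 0 < t <= 1 -> (1 - t) * b <= a) -> b <= a.
Proof. intros hb h. destruct (Rle_or_lt b a) as [|hlt]; [auto|].
  assert (ha : 0 <= a) by (specialize (h 1 ltac:(lra)); lra).
  exfalso. specialize (h ((b - a) / (2 * b)) ltac:(split; [apply Rdiv_lt_0_compat; lra| apply Rmult_le_reg_l with (2*b); [lra|]; field_simplify; lra])).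
  assert ((1 - (b - a) / (2 * b)) * b = (a + b) / 2) by (field; lra). lra. Qed.

Lemma strong_F (H : InnerSpace) (f : H -> ext) (hconv : convex (@hcomb H) f) (q : H) rho
  (hrho : 0 < rho) x0 v0 : f x0 = Some v0 ->
  (forall x v, f x = Some v -> hinner q x - v - rho / 2 * hnorm x ^ 2 <= hinner q x0 - v0 - rho / 2 * hnorm x0 ^ 2) ->
  forall x v, f x = Some v ->
   hinner q x - v - rho / 2 * hinner x x + rho / 2 * hinner (hsub x x0) (hsub x x0)
   <= hinner q x0 - v0 - rho / 2 * hinner x0 x0.
Proof. intros h0 hmax x v hx. rewrite hnorm2 in hmax.
  pose proof (hinner_pos H (hsub x x0)) as hD.
  cut (rho / 2 * hinner (hsub x x0) (hsub x x0) <= (hinner q x0 - v0 - rho / 2 * hinner x0 x0) - (hinner q x - v - rho / 2 * hinner x x)); [lra|].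
  apply lim_lemma; [apply Rmult_le_pos; lra|]. intros t ht.
  destruct (hconv x x0 v v0 t hx h0 ltac:(lra)) as [c [hc hcle]].
  specialize (hmax _ _ hc). rewrite hnorm2, hcomb_inner, hcomb_norm in hmax.
  apply (Rmult_le_reg_l t); [lra|].
  assert (t * v + (1 - t) * v0 >= c) by lra. nra. Qed.

Lemma strong_G m (g : vec m -> ext) mu (hmu : 0 < mu) (hsc : strongly_convex mu g) (p : vec m) y0 w0 :
  g y0 = Some w0 ->
  (forall x v, g x = Some v -> vdot m p y0 + w0 <= vdot m p x + v) ->
  forall x v, g x = Some v ->
   vdot m p y0 + w0 + mu / 2 * vdot m (vsub x y0) (vsub x y0) <= vdot m p x + v.
Proof. intros h0 hmin x v hx.
  pose proof (vdot_pos m (vsub x y0)) as hD.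
  cut (mu / 2 * vdot m (vsub x y0) (vsub x y0) <= (vdot m p x + v) - (vdot m p y0 + w0)); [lra|].
  apply lim_lemma; [apply Rmult_le_pos; lra|]. intros t ht.
  destruct (hsc x y0 (v - mu / 2 * vnorm x ^ 2) (w0 - mu / 2 * vnorm y0 ^ 2) t) as [c [hc hcle]].
  { rewrite hx; reflexivity. } { rewrite h0; reflexivity. } { lra. }
  destruct (g (vcomb t x y0)) as [gc|] eqn:eg; [|discriminate]. simpl in hc. injection hc as hc.
  specialize (hmin _ _ eg). rewrite !vnorm2 in hcle.
  assert (hc' : gc - mu/2 * vdot m (vcomb t x y0) (vcomb t x y0) = c) by (rewrite <- vnorm2; rewrite <- hc; ring).
  clear hc. unfold vcomb in *.
  vexp_in hcle. vexp_in hc'. vexp_in hmin. vexp.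
  rewrite (vdot_sym m y0 x) in *.
  apply (Rmult_le_reg_l t); [lra|]. nra. Qed.

Definition zz m (s : R) (pw : vec m * vec m) : vec m :=
  fun i => (1 / s) * ((1 + s) * snd pw i - fst pw i).

Lemma fgm_step_ineq (s L Pp Pw Pu Pq aa bb gg ab ag bg : R) :
  0 < s <= 1 -> 0 < L ->
  Pq <= Pw + (-(1/L)) * ((-(1/L)) * gg) * (L/2) + (-(1/L)) * gg ->
  0 <= aa - 2 * ab + bb ->
  True -> True.
Proof. auto. Qed.

Lemma fgm_pot m (psi : vec m -> R) (gr : vec m -> vec m) L kappa :
  0 < kappa <= L ->
  (forall p q, psi q <= psi p + vdot m (gr p) (vsub q p) + L / 2 * vdot m (vsub q p) (vsub q p)) ->
  (forall p q, psi p + vdot m (gr p) (vsub q p) + kappa / 2 * vdot m (vsub q p) (vsub q p) <= psi q) ->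
  forall u k,
   psi (fst (fgm gr L kappa k)) - psi u
   + kappa / 2 * vdot m (vsub (zz m (sqrt (kappa / L)) (fgm gr L kappa k)) u) (vsub (zz m (sqrt (kappa / L)) (fgm gr L kappa k)) u)
   <= (1 - sqrt (kappa / L)) ^ k * (psi vzero - psi u + kappa / 2 * vdot m u u).
Proof.
  intros hk upper lower u.
  set (s := sqrt (kappa / L)).
  assert (hs0 : 0 < s) by (apply sqrt_lt_R0; apply Rdiv_lt_0_compat; lra).
  assert (hs2 : s ^ 2 = kappa / L) by (apply pow2_sqrt; left; apply Rdiv_lt_0_compat; lra).
  assert (hkap : kappa = s ^ 2 * L) by (rewrite hs2; field; lra).
  assert (hs1 : s <= 1).
  { destruct (Rle_or_lt s 1) as [|h]; auto. assert (1 < s ^ 2) by nra.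
    assert (kappa / L <= 1) by (apply (Rmult_le_reg_r L); [lra|]; field_simplify; lra). lra. }
  assert (hbeta : (sqrt L - sqrt kappa) / (sqrt L + sqrt kappa) = (1 - s) / (1 + s)).
  { assert (hsk : sqrt kappa = s * sqrt L).
    { unfold s. rewrite <- sqrt_mult_alt by (left; apply Rdiv_lt_0_compat; lra).
      f_equal. field. lra. }
    assert (0 < sqrt L) by (apply sqrt_lt_R0; lra).
    rewrite hsk. field; repeat split; nra. }
  induction k as [|k IH].
  - simpl. assert (e : vsub (zz m s (vzero, vzero)) u = vopp u).
    { apply functional_extensionality; intro i. unfold vsub, vopp, zz, vzero; simpl. ring. }
    rewrite e. rewrite vdot_oppl, vdot_oppr. lra.
  - cbn [fgm]. destruct (fgm gr L kappa k) as [p w] eqn:E. cbn [fst snd] in *.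
    rewrite hbeta.
    set (g := gr w). set (a := vsub (zz m s (p, w)) u). set (b := vsub w u).
    assert (e1 : vsub (vsub w (vscal (1 / L) g)) w = vscal (-(1/L)) g).
    { apply functional_extensionality; intro i. unfold vsub, vscal. ring. }
    assert (e2 : vsub u w = vscal (-1) b).
    { apply functional_extensionality; intro i. unfold b, vsub, vscal. ring. }
    assert (e3 : vsub p w = vscal s (vsub b a)).
    { apply functional_extensionality; intro i. unfold a, b, zz, vsub, vscal; simpl. field. lra. }
    assert (e4 : vsub (zz m s (vsub w (vscal (1 / L) g),
        vadd (vsub w (vscal (1 / L) g)) (vscal ((1 - s) / (1 + s)) (vsub (vsub w (vscal (1 / L) g)) p)))) u
        = vadd (vadd (vscal (1 - s) a) (vscal s b)) (vscal (-(1 / (s * L))) g)).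
    { apply functional_extensionality; intro i. unfold a, b, zz, vsub, vscal, vadd; simpl.
      field. split; lra. }
    rewrite e4.
    pose proof (upper w (vsub w (vscal (1 / L) g))) as U. fold g in U. rewrite e1 in U.
    pose proof (lower w u) as L1. fold g in L1. rewrite e2 in L1.
    pose proof (lower w p) as L2. fold g in L2. rewrite e3 in L2.
    pose proof (vdot_pos m (vsub a b)) as hab.
    vexp_in U. vexp_in L1. vexp_in L2. vexp_in hab. vexp.
    rewrite ?(vdot_sym m b a), ?(vdot_sym m g a), ?(vdot_sym m g b) in *.
    set (Phi0 := psi vzero - psi u + kappa / 2 * vdot m u u) in *.
    set (Pq := psi (vsub w (vscal (1 / L) g))) in *.
    set (aa := vdot m a a) in *. set (bb := vdot m b b) in *. set (gg := vdot m g g) in *.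
    set (ab := vdot m a b) in *. set (ag := vdot m a g) in *. set (bg := vdot m b g) in *.
    rewrite hkap in L1, L2 |- *.
    assert (h1 : 0 <= s * (psi u - (psi w + -1 * bg + s ^ 2 * L / 2 * (-1 * (-1 * bb))))) by (apply Rmult_le_pos; lra).
    assert (h2 : 0 <= (1 - s) * (psi p - (psi w + s * (bg - ag) + s ^ 2 * L / 2 * (s * (s * (bb - ab - (ab - aa))))))) by (apply Rmult_le_pos; lra).
    assert (h3 : 0 <= (1 - s ^ 2) * s ^ 3 * L / 2 * (aa - ab - (ab - bb))).
    { apply Rmult_le_pos; [|lra]. assert (0 <= 1 - s ^ 2) by nra. assert (0 < s ^ 3) by (apply pow_lt; lra).
      apply Rmult_le_pos; [|lra]. apply Rmult_le_pos; [|lra]. apply Rmult_le_pos; lra. }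
    assert (step : Pq - psi u + s ^ 2 * L / 2 *
      ((1 - s) * ((1 - s) * aa) + (1 - s) * (s * ab) + (1 - s) * (- (1 / (s * L)) * ag) +
       (s * ((1 - s) * ab) + s * (s * bb) + s * (- (1 / (s * L)) * bg)) +
       (- (1 / (s * L)) * ((1 - s) * ag) + - (1 / (s * L)) * (s * bg) +
        - (1 / (s * L)) * (- (1 / (s * L)) * gg)))
      <= (1 - s) * (psi p - psi u + s ^ 2 * L / 2 * aa)).
    { assert (eq : (1 - s) * (psi p - psi u + s ^ 2 * L / 2 * aa) - (Pq - psi u + s ^ 2 * L / 2 *
      ((1 - s) * ((1 - s) * aa) + (1 - s) * (s * ab) + (1 - s) * (- (1 / (s * L)) * ag) +
       (s * ((1 - s) * ab) + s * (s * bb) + s * (- (1 / (s * L)) * bg)) +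
       (- (1 / (s * L)) * ((1 - s) * ag) + - (1 / (s * L)) * (s * bg) +
        - (1 / (s * L)) * (- (1 / (s * L)) * gg)))) =
      s * (psi u - (psi w + -1 * bg + s ^ 2 * L / 2 * (-1 * (-1 * bb)))) +
      (1 - s) * (psi p - (psi w + s * (bg - ag) + s ^ 2 * L / 2 * (s * (s * (bb - ab - (ab - aa)))))) +
      (1 - s ^ 2) * s ^ 3 * L / 2 * (aa - ab - (ab - bb)) +
      (psi w + - (1 / L) * gg + L / 2 * (- (1 / L) * (- (1 / L) * gg)) - Pq)).
      { field. lra. }
      lra. }
    rewrite hkap in IH. rewrite <- tech_pow_Rmult.
    assert (eA : vdot m (vsub (zz m s (p, w)) u) (vsub (zz m s (p, w)) u) = aa) by reflexivity.
    rewrite eA in IH.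
    assert (h1s : 0 <= 1 - s) by lra.
    pose proof (Rmult_le_compat_l _ _ _ h1s IH) as HH.
    eapply Rle_trans; [exact step|]. change ((1 - s) ^ S k) with ((1 - s) * (1 - s) ^ k). rewrite Rmult_assoc. exact HH.
Qed.

Lemma esup_is (E : R -> Prop) l : is_lub E l -> esup E = Some l.
Proof. intro h. unfold esup. destruct (excluded_middle_informative (exists l, is_lub E l)) as [e|n].
  - f_equal. destruct (constructive_indefinite_description _ e) as [l' hl']. simpl. eapply is_lub_u; eauto.
  - exfalso. apply n. eauto. Qed.

Lemma Abound (H : InnerSpace) m (A : H -> vec m) nA rho : linear_map A -> is_opnorm A nA -> 0 < rho ->
  forall d z, vdot m d (A z) <= rho / 2 * hinner z z + nA ^ 2 / (2 * rho) * vdot m d d.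
Proof. intros HA Hn hr d z. pose proof (opnorm_bound H m A nA HA Hn z) as hb.
  pose proof (opnorm_nonneg H m A nA HA Hn) as hn0. pose proof (vdot_pos m d). pose proof (hinner_pos H z).
  destruct (Req_dec nA 0) as [h0|h0].
  - subst. assert (e : vdot m (A z) (A z) = 0) by (pose proof (vdot_pos m (A z)); nra).
    apply vdot_eq0 in e. rewrite e, vdot_zeror. nra.
  - assert (hp : 0 < nA ^ 2 / rho) by (apply Rdiv_lt_0_compat; [apply pow_lt; lra|lra]).
    pose proof (young m d (A z) (nA ^ 2 / rho) hp) as hy.
    assert (vdot m (A z) (A z) / (nA ^ 2 / rho) <= rho * hinner z z).
    { unfold Rdiv. apply (Rmult_le_reg_l (nA ^ 2 / rho)); [lra|].
      replace (nA ^ 2 / rho * (vdot m (A z) (A z) * / (nA ^ 2 * / rho))) with (vdot m (A z) (A z)) by (field; repeat split; lra).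
      replace (nA ^ 2 / rho * (rho * hinner z z)) with (nA ^ 2 * hinner z z) by (field; lra). lra. }
    assert (nA ^ 2 / (2 * rho) * vdot m d d = / 2 * (nA ^ 2 / rho * vdot m d d)) by (field; lra). lra. Qed.

Lemma sqrt_add_le a b : 0 <= a -> 0 <= b -> sqrt (a + b) <= sqrt a + sqrt b.
Proof. intros ha hb. pose proof (sqrt_pos a); pose proof (sqrt_pos b).
  apply Rsqr_incr_0_var; [|lra]. unfold Rsqr. rewrite sqrt_sqrt by lra.
  replace ((sqrt a + sqrt b) * (sqrt a + sqrt b)) with (sqrt a * sqrt a + sqrt b * sqrt b + 2 * sqrt a * sqrt b) by ring.
  rewrite !sqrt_sqrt by lra. nra. Qed.

Lemma exp_INR_mul n x : exp (INR n * x) = exp x ^ n.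
Proof. induction n as [|n IH]. - simpl. rewrite Rmult_0_l, exp_0. reflexivity.
  - rewrite S_INR. replace ((INR n + 1) * x) with (INR n * x + x) by ring. rewrite exp_plus, IH. simpl. ring. Qed.

Lemma poly_ineq s : 0 <= s <= 1 -> (1+s)^2*(1-s) <= 2*(1-s/4)^4.
Proof. intros. assert (0 <= s * (s - 3/5)^2) by (apply Rmult_le_pos; [lra| apply pow2_ge_0]).
  assert (0 <= (s - 592/1000)^2) by apply pow2_ge_0.
  assert (0 <= s^4) by (apply pow_le; lra). nra. Qed.

Lemma key_exp s k : 0 < s <= 1 -> (1 <= k)%nat -> (1 + s) ^ 2 * (1 - s) ^ k <= 2 * exp (- INR k * s).
Proof. intros hs hk. destruct k as [|j]; [lia|].
  replace (- INR (S j) * s) with (INR (S j) * (- s)) by ring. rewrite exp_INR_mul.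
  simpl pow at 2 3.
  assert (h1 : 1 - s <= exp (- s)) by (pose proof (exp_ineq1_le (- s)); lra).
  assert (hj : (1 - s) ^ j <= exp (- s) ^ j) by (apply pow_incr; lra).
  assert (h4 : (1 - s / 4) ^ 4 <= exp (- s)).
  { replace (- s) with (INR 4 * (- s / 4)) by (simpl; field). rewrite exp_INR_mul.
    apply pow_incr. pose proof (exp_ineq1_le (- s / 4)). lra. }
  pose proof (poly_ineq s ltac:(lra)).
  assert (hp : 0 <= (1 - s) ^ j) by (apply pow_le; lra).
  assert (hq : (1 + s) ^ 2 * (1 - s) <= 2 * exp (- s)) by lra.
  assert (h0p : 0 <= (1 + s) ^ 2 * (1 - s)) by (apply Rmult_le_pos; [apply pow2_ge_0|lra]).
  pose proof (Rmult_le_compat _ _ _ _ h0p hp hq hj) as hf. rewrite <- !Rmult_assoc. exact hf. Qed.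

Lemma final_real L s D k : 0 < L -> 0 < s <= 1 -> 0 <= D -> (1 <= k)%nat ->
  sqrt (2 * L * ((1 - s) ^ k) * D) + sqrt (2 * (s ^ 2 * L) * ((1 - s) ^ k) * D)
  <= 2 * sqrt (L * D) * exp (- (INR k / 2) * s).
Proof. intros hL hs hD hk. set (e := (1 - s) ^ k).
  assert (he : 0 <= e) by (apply pow_le; lra).
  assert (hX : 0 <= 2 * L * e * D) by (repeat apply Rmult_le_pos; lra).
  replace (2 * (s ^ 2 * L) * e * D) with (s ^ 2 * (2 * L * e * D)) by ring.
  rewrite (sqrt_mult_alt (s ^ 2) (2 * L * e * D)) by (apply pow2_ge_0). rewrite sqrt_pow2 by lra.
  set (E := exp (- (INR k / 2) * s)).
  assert (hE : E * E = exp (- INR k * s)) by (unfold E; rewrite <- exp_plus; f_equal; field).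
  assert (0 < E) by apply exp_pos.
  pose proof (sqrt_pos (L * D)). pose proof (sqrt_pos (2 * L * e * D)).
  apply Rsqr_incr_0_var; [|apply Rmult_le_pos; lra]. unfold Rsqr.
  replace ((sqrt (2 * L * e * D) + s * sqrt (2 * L * e * D)) * (sqrt (2 * L * e * D) + s * sqrt (2 * L * e * D)))
    with ((1 + s) ^ 2 * (sqrt (2 * L * e * D) * sqrt (2 * L * e * D))) by ring.
  replace (2 * sqrt (L * D) * E * (2 * sqrt (L * D) * E)) with (4 * (sqrt (L * D) * sqrt (L * D)) * (E * E)) by ring.
  rewrite !sqrt_sqrt by (repeat apply Rmult_le_pos; lra). rewrite hE.
  pose proof (key_exp s k hs hk) as hke. fold e in hke.
  assert (0 <= L * D) by (apply Rmult_le_pos; lra).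
  replace ((1 + s) ^ 2 * (2 * L * e * D)) with (2 * (L * D) * ((1 + s) ^ 2 * e)) by ring.
  replace (4 * (L * D) * exp (- INR k * s)) with (2 * (L * D) * (2 * exp (- INR k * s))) by ring.
  apply Rmult_le_compat_l; [lra|]. exact hke. Qed.

Lemma young_mu m (d a : vec m) mu : 0 < mu -> vdot m d a <= 1 / (2 * mu) * vdot m d d + mu / 2 * vdot m a a.
Proof. intros hmu. pose proof (vdot_pos m (vsub d (vscal mu a))) as h. vexp_in h.
  rewrite (vdot_sym m a d) in h.
  apply (Rmult_le_reg_l (2 * mu)); [lra|].
  replace (2 * mu * (1 / (2 * mu) * vdot m d d + mu / 2 * vdot m a a)) with (vdot m d d + mu * mu * vdot m a a) by (field; lra).
  nra. Qed.

Lemma vdot_subsym m (x y : vec m) : vdot m (vsub x y) (vsub x y) = vdot m (vsub y x) (vsub y x).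
Proof. vexp. rewrite (vdot_sym m y x). ring. Qed.

Lemma sqrt_le_of X Y : 0 <= Y -> X <= Y ^ 2 -> sqrt X <= Y.
Proof. intros hY hX. rewrite <- (sqrt_pow2 Y hY). apply sqrt_le_1_alt. exact hX. Qed.

Lemma sq_expand m k (p q : vec m) : k / 2 * vdot m q q = k / 2 * vdot m p p + k * vdot m p (vsub q p) + k / 2 * vdot m (vsub q p) (vsub q p).
Proof. vexp. rewrite (vdot_sym m q p). field. Qed.

Theorem mainTheorem5
  (H : InnerSpace) (Hcomplete : complete H) (m : nat)
  (f : H -> ext) (g : vec m -> ext) (mu : R)
  (A : H -> vec m) (Astar : vec m -> H)
  (f_proper : proper f) (f_convex : convex (@hcomb H) f)
  (f_lsc : lsc (@hdist H) f) (f_bdd : bounded_dom f)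
  (g_proper : proper g) (g_lsc : lsc (@vdist m) g)
  (mu_pos : 0 < mu) (g_sc : strongly_convex mu g)
  (A_lin : linear_map A) (A_cont : bounded_map A)
  (A_adj : forall p x, hinner (Astar p) x = vdot m p (A x))
  (dom_inter : exists x, dom f x /\ dom g (A x))
  (nA : R) (H_nA : is_opnorm A nA)
  (Df : R) (H_Df : is_Df f Df) (Df_pos : 0 < Df)
  (Rb : R) (Rb_pos : 0 < Rb) (pstar : vec m)
  (pstar_opt : forall p, ext_le (theta f g Astar pstar) (theta f g Astar p))
  (pstar_bd : vnorm pstar <= Rb)
  (eps : R) (eps_pos : 0 < eps)
  (xf : vec m -> H) (H_xf : forall p, is_xf f Astar (rho_of eps Df) p (xf p))
  (xg : vec m -> vec m) (H_xg : forall p, is_xg g p (xg p)) :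
  let rho := rho_of eps Df in
  let kappa := kappa_of eps Rb in
  let L := Lconst nA rho mu kappa in
  let grad := fun w => vadd (vsub (A (xf w)) (xg w)) (vscal kappa w) in
  exists t0 tstar,
    theta f g Astar vzero = Some t0 /\ theta f g Astar pstar = Some tstar /\
    forall k : nat,
      let pk := fst (fgm grad L kappa k) in
      vnorm (vsub (A (xf pk)) (xg pk))
      <= 2 * sqrt (L * (t0 - tstar + eps / 3)) * exp (- (INR k / 2) * sqrt (kappa / L))
         + 4 * sqrt 2 * eps / (3 * Rb).
Proof.
  intros rho kappa L grad.
  assert (hrho : 0 < rho) by (unfold rho, rho_of; apply Rdiv_lt_0_compat; lra).
  assert (hkap : 0 < kappa) by (unfold kappa, kappa_of; apply Rdiv_lt_0_compat; [lra| apply Rmult_lt_0_compat; [lra| apply pow_lt; lra]]).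
  pose proof (opnorm_nonneg H m A nA A_lin H_nA) as hnA.
  set (Lp := nA ^ 2 / rho + 1 / mu).
  assert (hLp : 0 < Lp).
  { unfold Lp. assert (0 <= nA ^ 2 / rho) by (unfold Rdiv; apply Rmult_le_pos; [apply pow2_ge_0|left; apply Rinv_0_lt_compat; lra]).
    assert (0 < 1 / mu) by (apply Rdiv_lt_0_compat; lra). lra. }
  assert (hLdef : L = Lp + kappa) by reflexivity.
  set (fv := fun x => match f x with Some v => v | None => 0 end).
  set (gv := fun x => match g x with Some v => v | None => 0 end).
  assert (Hf : forall p, f (xf p) = Some (fv (xf p)) /\ forall x v, f x = Some v ->
     vdot m p (A x) - v - rho / 2 * hinner x x <= vdot m p (A (xf p)) - fv (xf p) - rho / 2 * hinner (xf p) (xf p)).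
  { intro p. destruct (H_xf p) as [v0 [h0 hmax]]. unfold fv; rewrite h0. split; auto.
    intros x v hx. specialize (hmax x v hx). rewrite !A_adj, !hnorm2 in hmax. exact hmax. }
  assert (Hg : forall p, g (xg p) = Some (gv (xg p)) /\ forall x v, g x = Some v ->
     vdot m p (xg p) + gv (xg p) <= vdot m p x + v).
  { intro p. destruct (H_xg p) as [v0 [h0 hmin]]. unfold gv; rewrite h0. split; auto. }
  set (FF := fun p => vdot m p (A (xf p)) - fv (xf p) - rho / 2 * hinner (xf p) (xf p)).
  set (GG := fun p => - vdot m p (xg p) - gv (xg p)).
  set (Phi := fun p => FF p + GG p).
  set (psi := fun p => Phi p + kappa / 2 * vdot m p p).
  assert (lowP : forall p q, Phi p + vdot m (vsub (A (xf p)) (xg p)) (vsub q p) <= Phi q).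
  { intros p q. unfold Phi, FF, GG; cbv beta. destruct (Hf q) as [_ hq]. destruct (Hf p) as [hp0 _].
    specialize (hq _ _ hp0). destruct (Hg q) as [_ gq]. destruct (Hg p) as [gp0 _]. specialize (gq _ _ gp0).
    vexp. rewrite (vdot_sym m (A (xf p)) q), (vdot_sym m (A (xf p)) p), (vdot_sym m (xg p) q), (vdot_sym m (xg p) p). lra. }
  assert (upP : forall p q, Phi q <= Phi p + vdot m (vsub (A (xf p)) (xg p)) (vsub q p) + Lp / 2 * vdot m (vsub q p) (vsub q p)).
  { intros p q.
    destruct (H_xf p) as [vp [hp0 hpmax]].
    pose proof (strong_F H f f_convex (Astar p) rho hrho (xf p) vp hp0 hpmax) as sF.
    destruct (Hf q) as [hq0 _]. specialize (sF _ _ hq0). rewrite !A_adj in sF.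
    assert (efv : fv (xf p) = vp) by (unfold fv; rewrite hp0; reflexivity).
    destruct (Hg p) as [gp0 gpmin].
    pose proof (strong_G m g mu mu_pos g_sc p (xg p) (gv (xg p)) gp0 gpmin) as sG.
    destruct (Hg q) as [gq0 _]. specialize (sG _ _ gq0).
    set (d := vsub q p).
    pose proof (Abound H m A nA rho A_lin H_nA hrho d (hsub (xf q) (xf p))) as ab.
    rewrite (A_sub H m A A_lin), vdot_subr in ab.
    pose proof (young_mu m d (vsub (xg p) (xg q)) mu mu_pos) as yg.
    rewrite vdot_subr in yg. rewrite (vdot_subsym m (xg p) (xg q)) in yg.
    assert (e1 : vdot m q (A (xf q)) = vdot m p (A (xf q)) + vdot m d (A (xf q))) by (unfold d; vexp; ring).
    assert (e2 : vdot m q (xg q) = vdot m p (xg q) + vdot m d (xg q)) by (unfold d; vexp; ring).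
    assert (eL : Lp / 2 * vdot m d d = nA ^ 2 / (2 * rho) * vdot m d d + 1 / (2 * mu) * vdot m d d) by (unfold Lp; field; lra).
    unfold Phi, FF, GG; cbv beta. rewrite e1, e2, eL, efv. rewrite vdot_subl, (vdot_sym m (A (xf p)) d), (vdot_sym m (xg p) d).
    set (T1 := rho / 2 * hinner (hsub (xf q) (xf p)) (hsub (xf q) (xf p))) in *.
    set (T2 := nA ^ 2 / (2 * rho) * vdot m d d) in *.
    set (T3 := 1 / (2 * mu) * vdot m d d) in *.
    set (T4 := mu / 2 * vdot m (vsub (xg q) (xg p)) (vsub (xg q) (xg p))) in *.
    lra. }
  assert (egrad : forall p, grad p = vadd (vsub (A (xf p)) (xg p)) (vscal kappa p)) by reflexivity.
  assert (eq2 : forall p q, kappa / 2 * vdot m q q = kappa / 2 * vdot m p p + kappa * vdot m p (vsub q p) + kappa / 2 * vdot m (vsub q p) (vsub q p)).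
  { intros p q. apply sq_expand. }
  assert (upS : forall p q, psi q <= psi p + vdot m (grad p) (vsub q p) + L / 2 * vdot m (vsub q p) (vsub q p)).
  { intros p q. pose proof (upP p q) as h. unfold psi; cbv beta. rewrite egrad, vdot_addl, vdot_scall, (eq2 p q).
    assert (eL : L / 2 * vdot m (vsub q p) (vsub q p) = Lp / 2 * vdot m (vsub q p) (vsub q p) + kappa / 2 * vdot m (vsub q p) (vsub q p)) by (rewrite hLdef; field).
    rewrite eL. lra. }
  assert (lowS : forall p q, psi p + vdot m (grad p) (vsub q p) + kappa / 2 * vdot m (vsub q p) (vsub q p) <= psi q).
  { intros p q. pose proof (lowP p q) as h. unfold psi; cbv beta. rewrite egrad, vdot_addl, vdot_scall, (eq2 p q). lra. }
  assert (hkL : 0 < kappa <= L) by (rewrite hLdef; lra).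
  pose proof (fgm_pot m psi grad L kappa hkL upS lowS) as pot.
  assert (hrd : rho * Df = eps / 3) by (unfold rho, rho_of; field; lra).
  assert (thv : forall p, exists t, theta f g Astar p = Some t /\ Phi p <= t <= Phi p + rho * Df).
  { intro p.
    set (E1 := fun r => exists x v, f x = Some v /\ r = hinner (Astar p) x - v).
    assert (b1 : forall r, E1 r -> r <= FF p + rho * Df).
    { intros r [x [v [hx ->]]]. destruct (Hf p) as [_ hm]. specialize (hm x v hx). rewrite A_adj.
      destruct H_Df as [ub _]. assert (hD : / 2 * hnorm x ^ 2 <= Df).
      { apply ub. exists x. split; [intro e; congruence| reflexivity]. }
      rewrite hnorm2 in hD. unfold FF; cbv beta.
      assert (rho / 2 * hinner x x <= rho * Df).
      { replace (rho / 2 * hinner x x) with (rho * (/ 2 * hinner x x)) by field. apply Rmult_le_compat_l; lra. }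
      lra. }
    assert (m1 : E1 (FF p + rho / 2 * hinner (xf p) (xf p))).
    { exists (xf p), (fv (xf p)). split; [apply Hf|]. unfold FF; rewrite A_adj; ring. }
    destruct (completeness E1) as [l hl].
    { exists (FF p + rho * Df). intros r hr; apply b1; auto. }
    { eauto. }
    assert (hl1 : FF p + rho / 2 * hinner (xf p) (xf p) <= l) by (apply hl; auto).
    assert (hl2 : l <= FF p + rho * Df) by (apply hl; intros r hr; apply b1; auto).
    assert (hE2 : is_lub (fun r => exists x v, g x = Some v /\ r = vdot m (vopp p) x - v) (GG p)).
    { split.
      - intros r [x [v [hx ->]]]. destruct (Hg p) as [_ hm]. specialize (hm x v hx). rewrite vdot_oppl. unfold GG; lra.
      - intros b hb. apply hb. exists (xg p), (gv (xg p)). split; [apply Hg|]. rewrite vdot_oppl; unfold GG; ring. }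
    assert (e1 : conjH f (Astar p) = Some l) by (apply esup_is; exact hl).
    assert (e2 : conjV g (vopp p) = Some (GG p)) by (apply esup_is; exact hE2).
    exists (l + GG p). unfold theta. rewrite e1, e2. simpl. split; [reflexivity|].
    assert (0 <= rho / 2 * hinner (xf p) (xf p)) by (apply Rmult_le_pos; [lra| apply hinner_pos]).
    unfold Phi; cbv beta. lra. }
  destruct (thv vzero) as [t0 [ht0 [ht0a ht0b]]].
  destruct (thv pstar) as [ts [hts [htsa htsb]]].
  exists t0, ts. split; [exact ht0|]. split; [exact hts|].
  assert (hopt : forall p, ts - eps / 3 <= Phi p).
  { intro p. destruct (thv p) as [t [ht [_ htb]]]. specialize (pstar_opt p). rewrite hts, ht in pstar_opt.
    simpl in pstar_opt. lra. }
  set (Dl := t0 - ts + eps / 3).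
  assert (hDl : 0 <= Dl) by (unfold Dl; pose proof (hopt vzero); lra).
  intros k pk.
  set (s := sqrt (kappa / L)).
  assert (hL : 0 < L) by lra.
  assert (hs0 : 0 < s) by (apply sqrt_lt_R0; apply Rdiv_lt_0_compat; lra).
  assert (hs2 : s ^ 2 = kappa / L) by (apply pow2_sqrt; left; apply Rdiv_lt_0_compat; lra).
  assert (hks : kappa = s ^ 2 * L) by (rewrite hs2; field; lra).
  assert (hs1 : s <= 1).
  { destruct (Rle_or_lt s 1) as [|h]; auto. assert (1 < s ^ 2) by nra.
    assert (kappa / L <= 1) by (apply (Rmult_le_reg_r L); [lra|]; field_simplify; lra). lra. }
  set (e := (1 - s) ^ k).
  assert (he : 0 <= e) by (apply pow_le; lra).
  assert (hA : forall u, psi pk - psi u <= e * Dl).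
  { intro u. pose proof (pot u k) as hp. fold s in hp. fold pk in hp. fold e in hp.
    pose proof (vdot_pos m (vsub (zz m s (fgm grad L kappa k)) u)) as hz.
    assert (hz2 : 0 <= kappa / 2 * vdot m (vsub (zz m s (fgm grad L kappa k)) u) (vsub (zz m s (fgm grad L kappa k)) u)) by (apply Rmult_le_pos; lra).
    assert (ep0 : psi vzero = Phi vzero) by (unfold psi; cbv beta; rewrite vdot_zerol; ring).
    assert (epu : psi vzero - psi u + kappa / 2 * vdot m u u = Phi vzero - Phi u) by (rewrite ep0; unfold psi; cbv beta; ring).
    rewrite epu in hp. pose proof (hopt u).
    assert (hd : Phi vzero - Phi u <= Dl) by (unfold Dl; lra).
    pose proof (Rmult_le_compat_l e _ _ he hd) as hm. lra. }
  set (G := grad pk).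
  assert (hG : vdot m G G <= 2 * L * e * Dl).
  { set (u1 := vsub pk (vscal (1 / L) G)).
    pose proof (upS pk u1) as h. fold G in h.
    assert (eu : vsub u1 pk = vscal (- (1 / L)) G) by (apply functional_extensionality; intro i; unfold u1, vsub, vscal; ring).
    rewrite eu, vdot_scalr, vdot_scall, vdot_scalr in h.
    pose proof (hA u1).
    assert (ee : - (1 / L) * vdot m G G + L / 2 * (- (1 / L) * (- (1 / L) * vdot m G G)) = - (vdot m G G / (2 * L))) by (field; lra).
    rewrite Rplus_assoc, ee in h.
    assert (vdot m G G / (2 * L) <= e * Dl) by lra.
    apply (Rmult_le_reg_r (/ (2 * L))); [apply Rinv_0_lt_compat; lra|].
    replace (2 * L * e * Dl * / (2 * L)) with (e * Dl) by (field; lra). unfold Rdiv in H0. lra. }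
  assert (hP : kappa / 2 * vdot m pk pk <= e * Dl + 2 * eps / 3).
  { pose proof (hA pstar) as h. unfold psi in h; cbv beta in h.
    pose proof (hopt pk).
    assert (hpp : vdot m pstar pstar <= Rb ^ 2).
    { rewrite <- vnorm2. apply pow_incr. split; [apply vnorm_pos| exact pstar_bd]. }
    assert (kappa / 2 * vdot m pstar pstar <= eps / 3).
    { replace (eps / 3) with (kappa / 2 * Rb ^ 2) by (unfold kappa, kappa_of; field; lra).
      apply Rmult_le_compat_l; lra. }
    lra. }
  assert (edP : vsub (A (xf pk)) (xg pk) = vadd G (vscal (- kappa) pk)).
  { apply functional_extensionality; intro i. unfold G. rewrite egrad. unfold vadd, vsub, vscal. ring. }
  rewrite edP. eapply Rle_trans; [apply vtriangle|].
  assert (hG2 : vnorm G <= sqrt (2 * L * e * Dl)) by (apply sqrt_le_1_alt; exact hG).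
  assert (eP : vnorm (vscal (- kappa) pk) = sqrt (kappa ^ 2 * vdot m pk pk)).
  { unfold vnorm. rewrite vdot_scall, vdot_scalr. f_equal. ring. }
  rewrite eP.
  assert (hpos3 : 0 < 4 * sqrt 2 * eps / (3 * Rb)).
  { assert (0 < sqrt 2) by (apply sqrt_lt_R0; lra). apply Rdiv_lt_0_compat; [|lra]. nra. }
  destruct k as [|k'].
  - assert (epk : pk = vzero) by reflexivity. rewrite epk, vdot_zerol, Rmult_0_r, sqrt_0.
    assert (e1 : e = 1) by reflexivity.
    assert (eE : exp (- (INR 0 / 2) * s) = 1) by (simpl; replace (- (0 / 2) * s) with 0 by field; apply exp_0).
    rewrite eE. rewrite e1 in hG2.
    assert (s2 : sqrt (2 * L * 1 * Dl) <= 2 * sqrt (L * Dl)).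
    { replace (2 * L * 1 * Dl) with (2 * (L * Dl)) by ring. rewrite sqrt_mult_alt by lra.
      assert (sqrt 2 <= 2) by (apply sqrt_le_of; lra). pose proof (sqrt_pos (L * Dl)). nra. }
    lra.
  - assert (hk1 : (1 <= S k')%nat) by lia.
    pose proof (final_real L s Dl (S k') hL (conj hs0 hs1) hDl hk1) as hfin. fold e in hfin.
    assert (hq : kappa ^ 2 * vdot m pk pk <= 2 * (s ^ 2 * L) * e * Dl + 4 * kappa * eps / 3).
    { rewrite <- hks. assert (kappa ^ 2 * vdot m pk pk = 2 * kappa * (kappa / 2 * vdot m pk pk)) by (field). 
      rewrite H0. assert (0 <= 2 * kappa) by lra. pose proof (Rmult_le_compat_l _ _ _ H1 hP). nra. }
    assert (hq2 : sqrt (kappa ^ 2 * vdot m pk pk) <= sqrt (2 * (s ^ 2 * L) * e * Dl) + sqrt (4 * kappa * eps / 3)).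
    { eapply Rle_trans; [apply sqrt_le_1_alt; exact hq|]. apply sqrt_add_le.
      - assert (0 <= s ^ 2) by apply pow2_ge_0.
        assert (0 <= 2 * (s ^ 2 * L)) by nra. apply Rmult_le_pos; [apply Rmult_le_pos|]; lra.
      - assert (0 < 4 * kappa * eps) by (apply Rmult_lt_0_compat; [apply Rmult_lt_0_compat|]; lra). apply Rlt_le, Rdiv_lt_0_compat; lra. }
    assert (hq3 : sqrt (4 * kappa * eps / 3) <= 4 * sqrt 2 * eps / (3 * Rb)).
    { apply sqrt_le_of; [lra|].
      replace ((4 * sqrt 2 * eps / (3 * Rb)) ^ 2) with (16 * (sqrt 2) ^ 2 * eps ^ 2 / (9 * Rb ^ 2)) by (field; lra).
      rewrite pow2_sqrt by lra. unfold kappa, kappa_of.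
      replace (4 * (2 * eps / (3 * Rb ^ 2)) * eps / 3) with (8 * eps ^ 2 / (9 * Rb ^ 2)) by (field; lra).
      apply Rmult_le_compat_r; [left; apply Rinv_0_lt_compat; assert (0 < Rb ^ 2) by (apply pow_lt; lra); lra|].
      assert (0 <= eps ^ 2) by apply pow2_ge_0. lra. }
    lra.
Qed.
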